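(* Let $n\ge 3$, and let $\psi$ be either $\sinh$ (with $R>0$) or $\sin$ (with $0<R<\pi$). Set $K_\psi=-1$ if $\psi=\sinh$ and $K_\psi=1$ if $\psi=\sin$, let $\phi(r):=\int_0^r\psi(s)\,ds$ for $r\in(0,R)$, and $$H_{n,\psi}:=\frac14\left(\Big(\sup_{(0,R)}\frac{\phi}{\psi}\Big)^{-2}-n(n-2)K_\psi\right).$$ Then for every radial function $\xi\in C^1_0(\mathcal{B}_R)$ (viewed as a function of $r\in[0,R]$), $$\int_0^R\psi^{n-1}\xi_r^2\,dr\ \ge\ \frac{(n-2)^2}{4}\int_0^R\psi^{n-1}\frac{\xi^2}{\psi^2}\,dr+H_{n,\psi}\int_0^R\psi^{n-1}\xi^2\,dr.$$ Moreover, if $\psi=\sinh$, or if $\psi=\sin$ and $R<R_0:=\sup\{s\in(0,\pi/2):\frac{\sin^2 s}{(1-\cos s)^2}>n(n-2)\}$, then $H_{n,\psi}>0$, and in particular $$\int_0^R\psi^{n-1}\xi_r^2\,dr\ \ge\ \frac{(n-2)^2}{4}\int_0^R\psi^{n-1}\frac{\xi^2}{\psi^2}\,dr\quad\text{for all radial }\xi\in C^1_0(\mathcal{B}_R).$$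
   Context: $\mathcal{B}_R$ is the geodesic ball of radius $R$ centered at the pole in the Riemannian model with metric $ds^2=dr^2+\psi(r)^2\,d\Theta^2$ (hyperbolic space $\mathbb{H}^n$ for $\psi=\sinh$, elliptic space $\mathbb{S}^n$ for $\psi=\sin$); $r$ is the geodesic distance to the center. *)

(* Defs.v *)
From Stdlib Require Import Reals.
From Coquelicot Require Import Coquelicot.
Open Scope R_scope.

Inductive model := Hyperbolic | Elliptic.

Definition psi (m : model) (r : R) : R :=
  match m with Hyperbolic => sinh r | Elliptic => sin r end.

Definition Kpsi (m : model) : R :=
  match m with Hyperbolic => -1 | Elliptic => 1 end.

Definition admissible_radius (m : model) (Rr : R) : Prop :=
  match m with Hyperbolic => 0 < Rr | Elliptic => 0 < Rr /\ Rr < PI end.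

Definition phi (m : model) (r : R) : R := RInt (psi m) 0 r.

Definition sup_set (E : R -> Prop) : R := real (Lub_Rbar E).

Definition sup_phi_psi (m : model) (Rr : R) : R :=
  sup_set (fun y => exists r, 0 < r < Rr /\ y = phi m r / psi m r).

Definition H_const (n : nat) (m : model) (Rr : R) : R :=
  / 4 * (/ (sup_phi_psi m Rr) ^ 2 - INR n * (INR n - 2) * Kpsi m).

Definition R0_threshold (n : nat) : R :=
  sup_set (fun s => 0 < s < PI / 2 /\
                    sin s ^ 2 / (1 - cos s) ^ 2 > INR n * (INR n - 2)).

(* Radial profile of a function in C^1_0(B_R): xi : R -> R is the profile
   r |-> xi(r), extended evenly to negative r (so that the radial function is
   C^1 at the center), C^1 on the line, and vanishing near r = R
   (compact support in the open ball). *)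
Definition radial_C1_0 (Rr : R) (xi : R -> R) : Prop :=
  (forall r, ex_derive xi r) /\
  (forall r, continuous (Derive xi) r) /\
  (forall r, xi (- r) = xi r) /\
  (exists rho, 0 < rho < Rr /\ forall r, rho <= r -> xi r = 0).

(* Main.v *)
Require Import Defs.
From Stdlib Require Import Reals Lra Psatz Classical Lia.
From Coquelicot Require Import Coquelicot.
Open Scope R_scope.

Lemma der_eqv (f : R -> R) (x l l' : R) : is_derive f x l -> l = l' -> is_derive f x l'.
Proof. intros H ->; exact H. Qed.

Lemma der_mul (f g : R -> R) (x df dg : R) : is_derive f x df -> is_derive g x dg ->
  is_derive (fun t => f t * g t) x (df * g x + f x * dg).
Proof. intros H1 H2. apply (is_derive_mult f g); auto. intros; apply Rmult_comm. Qed.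

Lemma der_add (f g : R -> R) (x df dg : R) : is_derive f x df -> is_derive g x dg ->
  is_derive (fun t => f t + g t) x (df + dg).
Proof. intros H1 H2. apply (is_derive_plus f g); auto. Qed.

Lemma der_pw (f : R -> R) n (x df : R) : is_derive f x df ->
  is_derive (fun t => f t ^ n) x (INR n * df * f x ^ Init.Nat.pred n).
Proof. intros H. apply is_derive_pow; auto. Qed.

Lemma der_sc (f : R -> R) (c x df : R) : is_derive f x df -> is_derive (fun t => c * f t) x (c * df).
Proof. intros H. apply is_derive_scal; auto. Qed.

Lemma cont_mul (f g : R -> R) (x : R) : continuous f x -> continuous g x -> continuous (fun t => f t * g t) x.
Proof. intros H1 H2. apply (continuous_mult f g); auto. Qed.

Lemma cont_add (f g : R -> R) (x : R) : continuous f x -> continuous g x -> continuous (fun t => f t + g t) x.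
Proof. intros H1 H2. apply (continuous_plus f g); auto. Qed.

Lemma cont_cst (c x : R) : continuous (fun _ : R => c) x.
Proof. apply continuous_const. Qed.

Lemma cont_pw (f : R -> R) n (x : R) : continuous f x -> continuous (fun t => f t ^ n) x.
Proof. intros H. induction n as [|n IH]; simpl.
 - apply cont_cst.
 - apply cont_mul; auto. Qed.

Lemma der_cont (f : R -> R) (x df : R) : is_derive f x df -> continuous f x.
Proof. intros H. apply (ex_derive_continuous (V:=R_NormedModule) f). exists df; exact H. Qed.

Lemma alg (Pk' P V D Y X K s0 kk : R) : P ^ 2 <> 0 -> s0 <> 0 ->
  Pk' * P ^ 2 * V ^ 2 +
  ((kk + 1) * D * Pk' * ((kk + 1) / 2 * D + / (2 * s0 ^ 2) * Y) +
   Pk' * P * ((kk + 1) / 2 * (- K * P) + / (2 * s0 ^ 2) * P)) *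
  X ^ 2 + Pk' * P * ((kk + 1) / 2 * D + / (2 * s0 ^ 2) * Y) * (2 * V * X) -
  ((kk + 1 + 1 + 1 - 2) ^ 2 / 4 * (Pk' * P ^ 2 * (X ^ 2 / P ^ 2)) +
   / 4 * (/ s0 ^ 2 - (kk + 1 + 1 + 1) * (kk + 1 + 1 + 1 - 2) * K) *
   (Pk' * P ^ 2 * X ^ 2)) =
  Pk' * (P * V + ((kk + 1) / 2 * D + / (2 * s0 ^ 2) * Y) * X) ^ 2 +
  Pk' * X ^ 2 * (/ (2 * s0 ^ 2)) ^ 2 * (s0 ^ 2 * P ^ 2 - Y ^ 2) +
  ((kk + 1) / 2) ^ 2 * Pk' * X ^ 2 * (D ^ 2 - (1 - K * P ^ 2)).
Proof. intros. assert (P <> 0) by (intro; subst; apply H; ring). field. split; auto. Qed.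

Section Key.
Variables (p dp Ph : R -> R) (K s0 Rr : R) (k : nat) (xi : R -> R).
Hypotheses (Hp : forall x, is_derive p x (dp x))
  (Hdp : forall x, is_derive dp x (- K * p x))
  (HPh : forall x, is_derive Ph x (p x))
  (Hid : forall x, dp x ^ 2 = 1 - K * p x ^ 2)
  (Hp0 : p 0 = 0)
  (Hpos : forall r, 0 < r < Rr -> 0 < p r)
  (HPhb : forall r, 0 < r < Rr -> 0 <= Ph r <= s0 * p r)
  (Hs0 : 0 < s0) (HRr : 0 < Rr)
  (Hxd : forall r, ex_derive xi r)
  (Hxc : forall r, continuous (Derive xi) r)
  (Hxz : xi Rr = 0).

Let a := (INR k + 1) / 2.
Let c := / (2 * s0 ^ 2).
Let F r := p r ^ (S k) * (a * dp r + c * Ph r).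
Let F' r := INR (S k) * dp r * p r ^ k * (a * dp r + c * Ph r)
            + p r ^ (S k) * (a * (- K * p r) + c * p r).
Let G r := F r * xi r ^ 2.
Let G' r := F' r * xi r ^ 2 + F r * (2 * Derive xi r * xi r).

Lemma derF x : is_derive F x (F' x).
Proof.
  unfold F. eapply der_eqv.
  - apply der_mul. apply der_pw, Hp.
    apply der_add; apply der_sc; [apply Hdp | apply HPh].
  - unfold F'. simpl Init.Nat.pred. ring.
Qed.

Lemma derG x : is_derive G x (G' x).
Proof.
  unfold G. eapply der_eqv.
  - apply der_mul. apply derF. apply der_pw. apply Derive_correct, Hxd.
  - unfold G'. simpl. ring.
Qed.

Lemma contp x : continuous p x. Proof. exact (der_cont _ _ _ (Hp x)). Qed.
Lemma contdp x : continuous dp x. Proof. exact (der_cont _ _ _ (Hdp x)). Qed.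
Lemma contPh x : continuous Ph x. Proof. exact (der_cont _ _ _ (HPh x)). Qed.
Lemma contxi x : continuous xi x. Proof. apply (ex_derive_continuous (V:=R_NormedModule) xi), Hxd. Qed.

Lemma contG' x : continuous G' x.
Proof.
  unfold G', F', F.
  pose proof (contp x). pose proof (contdp x). pose proof (contPh x). pose proof (contxi x).
  pose proof (Hxc x).
  repeat match goal with
  | |- continuous (fun t => _ + _) _ => apply cont_add
  | |- continuous (fun t => _ * _) _ => apply cont_mul
  | |- continuous (fun t => _ ^ _) _ => apply cont_pw
  | |- continuous (fun t => ?c) _ => apply cont_cst
  | |- _ => assumption
  end.
Qed.

Lemma RInt_G' : RInt G' 0 Rr = 0.
Proof.
  assert (H : is_RInt G' 0 Rr (minus (G Rr) (G 0))).
  { apply (is_RInt_derive (V:=R_CompleteNormedModule)); intros; [apply derG | apply contG']. }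
  rewrite (is_RInt_unique _ _ _ _ H).
  change (G Rr - G 0 = 0). unfold G, F. rewrite Hxz, Hp0. simpl pow. ring.
Qed.

Let f0 r := p r ^ (S (S (S k)) - 1) * Derive xi r ^ 2.
Let f1 r := p r ^ (S (S (S k)) - 1) * (xi r ^ 2 / p r ^ 2).
Let f2 r := p r ^ (S (S (S k)) - 1) * xi r ^ 2.

Lemma pointwise r : 0 < r < Rr ->
  (INR (S (S (S k))) - 2) ^ 2 / 4 * f1 r
  + (/ 4 * (/ s0 ^ 2 - INR (S (S (S k))) * (INR (S (S (S k))) - 2) * K)) * f2 r
  <= f0 r + G' r.
Proof.
  intros Hr. unfold f0, f1, f2, G', F', F. simpl (S (S (S k)) - 1)%nat.
  pose proof (Hpos r Hr) as Pp. pose proof (HPhb r Hr) as [Y0 Y1].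
  pose proof (Hid r) as Hd.
  assert (Pk : 0 < p r ^ k) by (apply pow_lt; lra).
  replace (p r ^ S (S k)) with (p r ^ k * p r ^ 2) by (simpl; ring).
  replace (p r ^ S k) with (p r ^ k * p r) by (simpl; ring).
  rewrite !S_INR.
  set (P := p r) in *. set (D := dp r) in *. set (Y := Ph r) in *.
  set (X := xi r). set (V := Derive xi r). set (Pk' := P ^ k) in *.
  assert (HP2 : P ^ 2 <> 0) by (apply pow_nonzero; lra).
  pose proof (alg Pk' P V D Y X K s0 (INR k) HP2 ltac:(lra)) as Eq.
  rewrite Hd in Eq. replace (1 - K * P ^ 2 - (1 - K * P ^ 2)) with 0 in Eq by ring.
  rewrite Rmult_0_r, Rplus_0_r in Eq. unfold a, c in *.
  assert (T1 : 0 <= Pk' * (P * V + (a * D + c * Y) * X) ^ 2).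
  { apply Rmult_le_pos; [lra | apply pow2_ge_0]. }
  assert (T2 : 0 <= Pk' * X ^ 2 * c ^ 2 * (s0 ^ 2 * P ^ 2 - Y ^ 2)).
  { apply Rmult_le_pos. apply Rmult_le_pos. apply Rmult_le_pos. lra. apply pow2_ge_0. apply pow2_ge_0.
    assert (Y <= s0 * P) by lra. nra. }
  unfold a, c in *. clearbody P D Y X V Pk'. lra.
Qed.

Lemma key :
  RInt (fun r => p r ^ (S (S (S k)) - 1) * Derive xi r ^ 2) 0 Rr >=
    (INR (S (S (S k))) - 2) ^ 2 / 4 *
      RInt (fun r => p r ^ (S (S (S k)) - 1) * (xi r ^ 2 / p r ^ 2)) 0 Rr
    + (/ 4 * (/ s0 ^ 2 - INR (S (S (S k))) * (INR (S (S (S k))) - 2) * K)) *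
      RInt (fun r => p r ^ (S (S (S k)) - 1) * xi r ^ 2) 0 Rr
  /\ 0 <= RInt (fun r => p r ^ (S (S (S k)) - 1) * xi r ^ 2) 0 Rr.
Proof.
  change (RInt f0 0 Rr >= (INR (S (S (S k))) - 2) ^ 2 / 4 * RInt f1 0 Rr
    + (/ 4 * (/ s0 ^ 2 - INR (S (S (S k))) * (INR (S (S (S k))) - 2) * K)) * RInt f2 0 Rr
    /\ 0 <= RInt f2 0 Rr).
  set (A := (INR (S (S (S k))) - 2) ^ 2 / 4).
  set (B := / 4 * (/ s0 ^ 2 - INR (S (S (S k))) * (INR (S (S (S k))) - 2) * K)).
  assert (ex0 : ex_RInt f0 0 Rr).
  { apply (ex_RInt_continuous (V:=R_CompleteNormedModule)); intros z _. unfold f0. simpl (S (S (S k)) - 1)%nat.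
    apply cont_mul; apply cont_pw; [apply contp | apply Hxc]. }
  assert (ex2 : ex_RInt f2 0 Rr).
  { apply (ex_RInt_continuous (V:=R_CompleteNormedModule)); intros z _. unfold f2. simpl (S (S (S k)) - 1)%nat.
    apply cont_mul; apply cont_pw; [apply contp | apply contxi]. }
  assert (ex1 : ex_RInt f1 0 Rr).
  { apply (ex_RInt_ext (fun r => p r ^ k * xi r ^ 2)).
    - rewrite Rmin_left, Rmax_right by lra. intros x Hx. unfold f1.
      simpl (S (S (S k)) - 1)%nat. pose proof (Hpos x Hx).
      simpl. field. lra.
    - apply (ex_RInt_continuous (V:=R_CompleteNormedModule)); intros z _.
      apply cont_mul; apply cont_pw; [apply contp | apply contxi]. }
  assert (exG : ex_RInt G' 0 Rr).
  { apply (ex_RInt_continuous (V:=R_CompleteNormedModule)); intros z _; apply contG'. }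
  assert (E1 : RInt (fun r => f0 r + G' r) 0 Rr = RInt f0 0 Rr + RInt G' 0 Rr)
    by exact (RInt_plus f0 G' 0 Rr ex0 exG).
  assert (ex1' : ex_RInt (fun r => A * f1 r) 0 Rr) by exact (ex_RInt_scal f1 0 Rr A ex1).
  assert (ex2' : ex_RInt (fun r => B * f2 r) 0 Rr) by exact (ex_RInt_scal f2 0 Rr B ex2).
  assert (E2 : RInt (fun r => A * f1 r + B * f2 r) 0 Rr
               = RInt (fun r => A * f1 r) 0 Rr + RInt (fun r => B * f2 r) 0 Rr)
    by exact (RInt_plus _ _ 0 Rr ex1' ex2').
  assert (E3 : RInt (fun r => A * f1 r) 0 Rr = A * RInt f1 0 Rr)
    by exact (RInt_scal f1 0 Rr A ex1).
  assert (E4 : RInt (fun r => B * f2 r) 0 Rr = B * RInt f2 0 Rr)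
    by exact (RInt_scal f2 0 Rr B ex2).
  assert (Hle : RInt (fun r => A * f1 r + B * f2 r) 0 Rr <= RInt (fun r => f0 r + G' r) 0 Rr).
  { apply RInt_le. lra.
    - exact (ex_RInt_plus _ _ 0 Rr ex1' ex2').
    - exact (ex_RInt_plus _ _ 0 Rr ex0 exG).
    - intros x Hx. apply pointwise; exact Hx. }
  rewrite E1, E2, E3, E4, RInt_G' in Hle.
  split. lra.
  apply RInt_ge_0. lra. exact ex2.
  intros x Hx. unfold f2. apply Rmult_le_pos.
  apply pow_le. pose proof (Hpos x Hx); lra. apply pow2_ge_0.
Qed.
End Key.


Lemma sup_ub (E : R -> Prop) (M y0 : R) : E y0 -> (forall y, E y -> y <= M) ->
  (forall y, E y -> y <= sup_set E) /\ sup_set E <= M.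
Proof.
  intros H0 HM. unfold sup_set. destruct (Lub_Rbar_correct E) as [Hub Hl].
  assert (HbM : is_ub_Rbar E M) by (intros y Hy; simpl; apply HM; auto).
  specialize (Hl _ HbM).
  destruct (Lub_Rbar E) as [l| |]; simpl in *.
  - split; [intros y Hy; exact (Hub y Hy) | exact Hl].
  - contradiction.
  - specialize (Hub y0 H0). simpl in Hub. contradiction.
Qed.

Lemma sup_exceed (E : R -> Prop) (x : R) : 0 < x -> x < sup_set E -> exists s, E s /\ x < s.
Proof.
  intros Hx Hs. apply NNPP. intro Hn.
  assert (Hub : is_ub_Rbar E x).
  { intros y Hy. simpl. apply Rnot_lt_le. intro Hlt. apply Hn. exists y; auto. }
  unfold sup_set in Hs. destruct (Lub_Rbar_correct E) as [_ Hl]. specialize (Hl _ Hub).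
  destruct (Lub_Rbar E) as [l| |]; simpl in *; lra.
Qed.

Lemma sup_facts m Rr (Ph : R -> R) M : 0 < Rr ->
  (forall r, 0 < r < Rr -> phi m r = Ph r /\ 0 < Ph r /\ 0 < psi m r /\ Ph r / psi m r <= M) ->
  0 < sup_phi_psi m Rr /\ sup_phi_psi m Rr <= M /\
  forall r, 0 < r < Rr -> 0 <= Ph r <= sup_phi_psi m Rr * psi m r.
Proof.
  intros HR H.
  assert (Hm : 0 < Rr / 2 < Rr) by lra.
  destruct (H _ Hm) as [e1 [e2 [e3 e4]]].
  destruct (sup_ub (fun y => exists r, 0 < r < Rr /\ y = phi m r / psi m r) M (phi m (Rr/2) / psi m (Rr/2)))
    as [U1 U2].
  - exists (Rr/2); auto.
  - intros y [r [Hr ->]]. destruct (H r Hr) as [h1 [h2 [h3 h4]]]. rewrite h1; auto.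
  - unfold sup_phi_psi. split; [|split; auto].
    + eapply Rlt_le_trans; [|apply U1; exists (Rr/2); split; auto].
      rewrite e1. apply Rdiv_lt_0_compat; auto.
    + intros r Hr. destruct (H r Hr) as [h1 [h2 [h3 h4]]]. split; [lra|].
      assert (Hy : Ph r / psi m r <= sup_set (fun y => exists r, 0 < r < Rr /\ y = phi m r / psi m r))
        by (apply U1; exists r; split; auto; rewrite h1; auto).
      apply (Rmult_le_compat_r (psi m r)) in Hy; [|lra].
      field_simplify in Hy; lra.
Qed.

Lemma tanhalf (r r0 : R) : 0 < r -> r <= r0 -> r0 < PI ->
  (1 - cos r) / sin r <= (1 - cos r0) / sin r0.
Proof.
  intros H1 H2 H3.
  assert (cc : cos r0 <= cos r).
  { destruct (Req_dec r r0) as [->|]; [lra|]. left; apply cos_decreasing_1; lra. }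
  pose proof (sin_gt_0 r H1 ltac:(lra)) as s1. pose proof (sin_gt_0 r0 ltac:(lra) H3) as s2.
  pose proof (sin2_cos2 r) as q1. pose proof (sin2_cos2 r0) as q2. unfold Rsqr in q1, q2.
  pose proof (COS_bound r). pose proof (COS_bound r0).
  set (c := cos r) in *. set (c0 := cos r0) in *. set (s := sin r) in *. set (t := sin r0) in *. clearbody c c0 s t.
  assert (Sq : ((1 - c) * t) ^ 2 <= ((1 - c0) * s) ^ 2).
  { replace (((1 - c) * t) ^ 2) with ((1-c)^2 * (1 - c0^2)) by nra.
    replace (((1 - c0) * s) ^ 2) with ((1-c0)^2 * (1 - c^2)) by nra.
    assert (0 <= (1-c)*(1-c0)) by nra. nra. }
  assert (L : (1 - c) * t <= (1 - c0) * s).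
  { rewrite <- !Rsqr_pow2 in Sq. apply Rsqr_incr_0_var; auto. apply Rmult_le_pos; lra. }
  apply (Rmult_le_reg_r (s * t)). nra.
  field_simplify; try lra.
Qed.


Lemma dsinh x : is_derive sinh x (cosh x).
Proof. apply is_derive_Reals, derivable_pt_lim_sinh. Qed.
Lemma dcosh x : is_derive cosh x (- -1 * sinh x).
Proof. replace (- -1 * sinh x) with (sinh x) by ring. apply is_derive_Reals, derivable_pt_lim_cosh. Qed.
Lemma dsin x : is_derive sin x (cos x).
Proof. apply is_derive_Reals, derivable_pt_lim_sin. Qed.
Lemma dcos x : is_derive cos x (- 1 * sin x).
Proof. replace (- 1 * sin x) with (- sin x) by ring. apply is_derive_Reals, derivable_pt_lim_cos. Qed.
Lemma dcoshm1 x : is_derive (fun t => cosh t - 1) x (sinh x).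
Proof.
  eapply der_eqv. apply (der_add cosh (fun _ => -1)). apply dcosh.
  apply (is_derive_const (K:=R_AbsRing) (V:=R_NormedModule)). change (- -1 * sinh x + 0 = sinh x). ring.
Qed.

Lemma dcosm x : is_derive (fun t => 1 - cos t) x (sin x).
Proof.
  apply (is_derive_ext (fun t => 1 + (-1) * cos t)). intros; simpl; ring.
  eapply der_eqv. apply (der_add (fun _ => 1) (fun t => -1 * cos t)).
  apply (is_derive_const (K:=R_AbsRing) (V:=R_NormedModule)). apply der_sc, dcos.
  change (0 + -1 * (-1 * sin x) = sin x). ring.
Qed.

Lemma phi_eq m (dp Ph : R -> R) : (forall x, is_derive (psi m) x (dp x)) ->
  (forall x, is_derive Ph x (psi m x)) -> Ph 0 = 0 -> forall r, phi m r = Ph r.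
Proof.
  intros Hp HPh H0 r. unfold phi.
  assert (H : is_RInt (psi m) 0 r (minus (Ph r) (Ph 0))).
  { apply (is_RInt_derive (V:=R_CompleteNormedModule)); intros; [apply HPh | apply (der_cont _ _ _ (Hp x))]. }
  rewrite (is_RInt_unique _ _ _ _ H). change (Ph r - Ph 0 = Ph r). rewrite H0. ring.
Qed.

Lemma expm x : exp x * exp (- x) = 1.
Proof. rewrite <- exp_plus. replace (x + - x) with 0 by ring. apply exp_0. Qed.

Lemma cosh_id x : cosh x ^ 2 = 1 - -1 * sinh x ^ 2.
Proof. unfold cosh, sinh. pose proof (expm x). nra. Qed.

Lemma sinh0 : sinh 0 = 0.
Proof. unfold sinh. rewrite Ropp_0. field. Qed.

Lemma hyp_bounds r : 0 < r -> 0 < sinh r /\ 0 < cosh r - 1 /\ (cosh r - 1) / sinh r <= 1.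
Proof.
  intros Hr. unfold sinh, cosh.
  pose proof (expm r). pose proof (exp_increasing (-r) r ltac:(lra)).
  pose proof (exp_increasing (-r) 0 ltac:(lra)). rewrite exp_0 in H1.
  pose proof (exp_pos r). pose proof (exp_pos (-r)).
  assert (A : 0 < (exp r - exp (- r)) / 2) by lra.
  split; [exact A|]. split.
  - assert (exp r > 1) by nra. nra.
  - apply (Rmult_le_reg_r ((exp r - exp (- r)) / 2)); auto. field_simplify; lra.
Qed.

Lemma cos_id x : cos x ^ 2 = 1 - 1 * sin x ^ 2.
Proof. pose proof (sin2_cos2 x). unfold Rsqr in H. nra. Qed.

Lemma cos_lt1 r : 0 < r < PI -> cos r < 1.
Proof. intros. rewrite <- cos_0. apply cos_decreasing_1; lra. Qed.

Lemma ell_sup Rr M : 0 < Rr < PI -> (forall r, 0 < r < Rr -> (1 - cos r) / sin r <= M) ->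
  0 < sup_phi_psi Elliptic Rr /\ sup_phi_psi Elliptic Rr <= M /\
  forall r, 0 < r < Rr -> 0 <= 1 - cos r <= sup_phi_psi Elliptic Rr * psi Elliptic r.
Proof.
  intros HR HM. apply (sup_facts Elliptic Rr (fun t => 1 - cos t) M). lra.
  intros r Hr. split; [|split; [|split]].
  - apply (phi_eq Elliptic cos (fun t => 1 - cos t)); [apply dsin | apply dcosm | ]. rewrite cos_0; ring.
  - pose proof (cos_lt1 r ltac:(lra)). lra.
  - simpl. apply sin_gt_0; lra.
  - simpl. apply HM; auto.
Qed.

Lemma facts m Rr : admissible_radius m Rr -> exists dp Ph : R -> R,
 (forall x, is_derive (psi m) x (dp x)) /\ (forall x, is_derive dp x (- Kpsi m * psi m x)) /\
 (forall x, is_derive Ph x (psi m x)) /\ (forall x, dp x ^ 2 = 1 - Kpsi m * psi m x ^ 2) /\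
 psi m 0 = 0 /\ (forall r, 0 < r < Rr -> 0 < psi m r) /\
 (forall r, 0 < r < Rr -> 0 <= Ph r <= sup_phi_psi m Rr * psi m r) /\ 0 < sup_phi_psi m Rr /\ 0 < Rr.
Proof.
  destruct m; simpl; intros HR.
  - exists cosh, (fun t => cosh t - 1).
    destruct (sup_facts Hyperbolic Rr (fun t => cosh t - 1) 1) as [S1 [S2 S3]]. lra.
    { intros r Hr. destruct (hyp_bounds r ltac:(lra)) as [h1 [h2 h3]]. split; [|split; [|split]]; auto.
      apply (phi_eq Hyperbolic cosh (fun t => cosh t - 1)); [apply dsinh | apply dcoshm1 | ]. rewrite cosh_0; ring. }
    split; [apply dsinh|]. split; [apply dcosh|]. split; [apply dcoshm1|].
    split; [apply cosh_id|]. split; [apply sinh0|].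
    split; [intros r Hr; apply hyp_bounds; lra|]. split; [exact S3|]. split; [exact S1|lra].
  - exists cos, (fun t => 1 - cos t).
    destruct (ell_sup Rr ((1 - cos Rr) / sin Rr)) as [S1 [S2 S3]]; auto.
    { intros r Hr. apply tanhalf; lra. }
    split; [apply dsin|]. split; [apply dcos|]. split; [apply dcosm|].
    split; [apply cos_id|]. split; [apply sin_0|].
    split; [intros r Hr; apply sin_gt_0; lra|]. split; [exact S3|]. split; [exact S1|lra].
Qed.

Lemma ell_H n Rr : 0 < Rr < PI -> Rr < R0_threshold n ->
  INR n * (INR n - 2) < (/ sup_phi_psi Elliptic Rr) ^ 2.
Proof.
  intros HR H0. unfold R0_threshold in H0.
  destruct (sup_exceed _ Rr ltac:(lra) H0) as [s1 [[Hs1 Hc] Hlt]].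
  destruct (ell_sup Rr ((1 - cos s1) / sin s1)) as [S1 [S2 S3]]; auto.
  { intros r Hr. apply tanhalf; lra. }
  pose proof (cos_lt1 s1 ltac:(lra)). pose proof (sin_gt_0 s1 ltac:(lra) ltac:(lra)).
  assert (HM : / ((1 - cos s1) / sin s1) <= / sup_phi_psi Elliptic Rr).
  { apply Rinv_le_contravar; auto. }
  assert (Eq : (/ ((1 - cos s1) / sin s1)) ^ 2 = sin s1 ^ 2 / (1 - cos s1) ^ 2).
  { field. lra. }
  assert (P1 : 0 <= / ((1 - cos s1) / sin s1)).
  { left. apply Rinv_0_lt_compat. apply Rdiv_lt_0_compat; lra. }
  assert ((/ ((1 - cos s1) / sin s1)) ^ 2 <= (/ sup_phi_psi Elliptic Rr) ^ 2).
  { apply pow_incr; auto. }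
  lra.
Qed.

Theorem proposition1p8 (n : nat) (m : model) (Rr : R) :
  (3 <= n)%nat -> admissible_radius m Rr ->
  (forall xi : R -> R, radial_C1_0 Rr xi ->
     RInt (fun r => psi m r ^ (n - 1) * (Derive xi r) ^ 2) 0 Rr >=
       (INR n - 2) ^ 2 / 4 *
         RInt (fun r => psi m r ^ (n - 1) * (xi r ^ 2 / psi m r ^ 2)) 0 Rr
       + H_const n m Rr * RInt (fun r => psi m r ^ (n - 1) * xi r ^ 2) 0 Rr)
  /\
  ((m = Hyperbolic \/ (m = Elliptic /\ Rr < R0_threshold n)) ->
     0 < H_const n m Rr /\
     forall xi : R -> R, radial_C1_0 Rr xi ->
       RInt (fun r => psi m r ^ (n - 1) * (Derive xi r) ^ 2) 0 Rr >=
         (INR n - 2) ^ 2 / 4 *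
           RInt (fun r => psi m r ^ (n - 1) * (xi r ^ 2 / psi m r ^ 2)) 0 Rr).
Proof.
  intros Hn Hadm.
  destruct n as [|[|[|k]]]; try (exfalso; lia).
  destruct (facts m Rr Hadm) as [dp [Ph [H1 [H2 [H3 [H4 [H5 [H6 [H7 [H8 H9]]]]]]]]]].
  assert (KEY : forall xi, radial_C1_0 Rr xi ->
    RInt (fun r => psi m r ^ (S (S (S k)) - 1) * Derive xi r ^ 2) 0 Rr >=
    (INR (S (S (S k))) - 2) ^ 2 / 4 *
      RInt (fun r => psi m r ^ (S (S (S k)) - 1) * (xi r ^ 2 / psi m r ^ 2)) 0 Rr
    + (/ 4 * (/ sup_phi_psi m Rr ^ 2 - INR (S (S (S k))) * (INR (S (S (S k))) - 2) * Kpsi m)) *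
      RInt (fun r => psi m r ^ (S (S (S k)) - 1) * xi r ^ 2) 0 Rr
    /\ 0 <= RInt (fun r => psi m r ^ (S (S (S k)) - 1) * xi r ^ 2) 0 Rr).
  { intros xi [Hd [Hc [_ [rho [Hrho Hz]]]]].
    apply (key (psi m) dp Ph (Kpsi m) (sup_phi_psi m Rr) Rr k xi); auto. apply Hz; lra. }
  unfold H_const. split.
  - intros xi Hxi. exact (proj1 (KEY xi Hxi)).
  - intros Hcase.
    assert (HH : 0 < / 4 * (/ sup_phi_psi m Rr ^ 2 - INR (S (S (S k))) * (INR (S (S (S k))) - 2) * Kpsi m)).
    { assert (Hk : 0 <= INR k) by apply pos_INR.
      rewrite <- pow_inv.
      destruct Hcase as [-> | [-> HR0]].
      + simpl Kpsi. pose proof (pow2_ge_0 (/ sup_phi_psi Hyperbolic Rr)). rewrite !S_INR. nra.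
      + simpl in Hadm. pose proof (ell_H (S (S (S k))) Rr Hadm HR0). simpl Kpsi. lra. }
    split; auto. intros xi Hxi. destruct (KEY xi Hxi) as [A B].
    pose proof (Rmult_le_pos _ _ (Rlt_le _ _ HH) B). lra.
Qed.
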